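(* Let $(\mathcal{X},\tau,\mathcal{F})$ be either (a) the inverse image of a locally measurable vector space $(\mathcal{X}_1,\tau_1,\mathcal{F}_1)$ under a linear map $f_1\colon\mathcal{X}\to\mathcal{X}_1$ (in which case set $I=\{1\}$), or (b) the projective limit of a projective system of locally measurable vector spaces $(\mathcal{X}_i,\tau_i,\mathcal{F}_i,f_{i,j})_{i\le j}$ indexed by a directed preordered set $(I,\le)$, with canonical projections $f_i\colon\mathcal{X}\to\mathcal{X}_i$. For each $i\in I$ and $x_i\in\mathcal{X}_i$ let $\mathcal{V}_{i,x_i}$ be a local basis of neighborhoods of $x_i$ in $(\mathcal{X}_i,\tau_i)$ consisting of $\mathcal{F}_i$-measurable sets. Then for every $x\in\mathcal{X}$, the set $\mathcal{V}_x:=\{f_i^{-1}(V_i) : i\in I,\ V_i\in\mathcal{V}_{i,f_i(x)}\}$ is a local basis of neighborhoods of $x$ in $(\mathcal{X},\tau)$. In particular, every point of $\mathcal{X}$ admits a local basis of neighborhoods consisting of $\mathcal{F}$-measurable sets.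
   Context: A locally measurable vector space is a triple $(\mathcal{Y},\sigma,\mathcal{G})$ with $\mathcal{Y}$ a real vector space, $\sigma$ a (not necessarily Hausdorff) vector space topology, $\mathcal{G}$ a $\sigma$-algebra, such that every point admits a local basis of neighborhoods belonging to $\mathcal{G}$ and every continuous linear functional is $\mathcal{G}$-measurable. Inverse image: $\tau$ and $\mathcal{F}$ are the initial topology and initial $\sigma$-algebra on the vector space $\mathcal{X}$ with respect to $f_1$. Projective system: $(I,\le)$ directed preordered set, $f_{i,j}\colon\mathcal{X}_j\to\mathcal{X}_i$ for $i\le j$ measurable, continuous and linear, $f_{i,i}=\mathrm{id}$, $f_{i,k}=f_{i,j}\circ f_{j,k}$ for $i\le j\le k$; the projective limit is $\mathcal{X}=\{(x_i)\in\prod_i\mathcal{X}_i: x_i=f_{i,j}(x_j)\ \forall i\le j\}$ with $f_i$ the coordinate projections, and $\tau$, $\mathcal{F}$ the initial topology and initial $\sigma$-algebra with respect to $(f_i)_{i\in I}$. *)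

(* Defs.v *)
(* Set-based encoding of topologies and
   sigma-algebras on a carrier type, so that families indexed by I are easy. *)
From mathcomp Require Import all_boot all_order all_algebra.
From mathcomp Require Import all_classical all_reals all_analysis.
Set Implicit Arguments. Unset Strict Implicit. Unset Printing Implicit Defensive.
Import Order.TTheory GRing.Theory Num.Theory.
Local Open Scope classical_set_scope.
Local Open Scope ring_scope.

Definition is_topology (T : Type) (O : set (set T)) : Prop :=
  [/\ O setT,
      (forall U V, O U -> O V -> O (U `&` V)) &
      (forall (F : set (set T)), F `<=` O -> O (\bigcup_(U in F) U))].

Definition nbhd_of (T : Type) (O : set (set T)) (x : T) (N : set T) : Prop :=
  exists U, [/\ O U, U x & U `<=` N].

Definition local_basis (T : Type) (O : set (set T)) (x : T) (B : set (set T)) : Prop :=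
  (forall N, B N -> nbhd_of O x N) /\
  (forall N, nbhd_of O x N -> exists2 V, B V & V `<=` N).

Definition cont_wrt (T1 T2 : Type) (O1 : set (set T1)) (O2 : set (set T2))
  (f : T1 -> T2) : Prop := forall U, O2 U -> O1 (f @^-1` U).

(* A (not necessarily Hausdorff) vector space topology on the real vector
   space V: a topology for which addition V x V -> V and scalar
   multiplication R x V -> V are jointly continuous (product topologies,
   R with its usual topology). *)
Definition vector_topology (R : realType) (V : lmodType R) (O : set (set V)) : Prop :=
  [/\ is_topology O,
      (forall x y W, nbhd_of O (x + y) W ->
         exists U1 U2, [/\ nbhd_of O x U1, nbhd_of O y U2 &
           forall u v, U1 u -> U2 v -> W (u + v)]) &
      (forall (a : R) x W, nbhd_of O (a *: x) W ->
         exists2 e : R, 0 < e & exists U, nbhd_of O x U /\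
           forall (b : R) u, `|b - a| < e -> U u -> W (b *: u))].

Definition locally_measurable (R : realType) (V : lmodType R)
  (O : set (set V)) (G : set (set V)) : Prop :=
  [/\ vector_topology O,
      sigma_algebra setT G,
      (forall x : V, exists B, local_basis O x B /\ B `<=` G) &
      (forall phi : {linear V -> R^o},
         cont_wrt O (@open R^o) phi ->
         forall A : set R, measurable A -> G (phi @^-1` A))].

Definition init_topology (I T : Type) (X : I -> Type)
  (O : forall i, set (set (X i))) (f : forall i, T -> X i) : set (set T) :=
  smallest (@is_topology T) [set W | exists i U, O i U /\ W = f i @^-1` U].

Definition init_sigma (I T : Type) (X : I -> Type)
  (G : forall i, set (set (X i))) (f : forall i, T -> X i) : set (set T) :=
  smallest (sigma_algebra setT) [set W | exists i A, G i A /\ W = f i @^-1` A].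

Definition projlim (R : realType) (I : Type) (X : I -> lmodType R)
  (le : I -> I -> Prop) (f : forall i j, X j -> X i) : Type :=
  {x : forall i, X i | forall i j, le i j -> x i = f i j (x j)}.

Definition projlim_proj (R : realType) (I : Type) (X : I -> lmodType R)
  (le : I -> I -> Prop) (f : forall i j, X j -> X i) (i : I)
  (x : projlim le f) : X i := proj1_sig x i.

Arguments projlim {R I X} le f.
Arguments projlim_proj {R I X} le f i x.

(* Main.v *)
Require Import Defs.
From mathcomp Require Import all_boot all_order all_algebra.
From mathcomp Require Import all_classical all_reals all_analysis.
Local Open Scope classical_set_scope.
Local Open Scope ring_scope.

Lemma gen_basis (I T : Type) (X : I -> Type) (O G : forall i, set (set (X i)))
  (p : forall i, T -> X i) (Vb : forall i, X i -> set (set (X i))) :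
  inhabited I -> (forall i, is_topology (O i)) ->
  (forall i j U1 U2 t, O i U1 -> O j U2 -> U1 (p i t) -> U2 (p j t) ->
     exists k U, [/\ O k U, U (p k t) & p k @^-1` U `<=` p i @^-1` U1 `&` p j @^-1` U2]) ->
  (forall i xi, local_basis (O i) xi (Vb i xi) /\ Vb i xi `<=` G i) ->
  forall x, local_basis (init_topology O p) x
     [set W | exists i V, Vb i (p i x) V /\ W = p i @^-1` V] /\
   (exists B, local_basis (init_topology O p) x B /\ B `<=` init_sigma G p).
Proof.
move=> [i0] topO dir hVb x.
have LB : local_basis (init_topology O p) x
     [set W | exists i V, Vb i (p i x) V /\ W = p i @^-1` V].
  split.
    move=> N [i [V [hV ->]]].
    have [U [OU Ux UV]] := proj1 (proj1 (hVb i (p i x))) V hV.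
    exists (p i @^-1` U); split => //; last by move=> t /UV.
    by apply: sub_gen_smallest; exists i, U.
  move=> N [W [tW Wx WN]].
  pose T' := [set W | forall t, W t -> exists i U,
      [/\ O i U, U (p i t) & p i @^-1` U `<=` W]].
  have tT' : is_topology T'.
    split.
    - move=> t _; exists i0, setT; split => //.
      by case: (topO i0).
    - move=> U V hU hV t [Ut Vt].
      have [i [U1 [OU1 U1t sU1]]] := hU t Ut.
      have [j [U2 [OU2 U2t sU2]]] := hV t Vt.
      have [k [U' [OU' U't sU']]] := dir i j U1 U2 t OU1 OU2 U1t U2t.
      exists k, U'; split => // s /sU' [h1 h2]; split; [exact: sU1|exact: sU2].
    - move=> F FO t [U FU Ut].
      have [i [U1 [OU1 U1t sU1]]] := FO U FU t Ut.
      exists i, U1; split => // s /sU1 Us; by exists U.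
  have sub : init_topology O p `<=` T'.
    apply: smallest_sub => // W' [i [U [OU ->]]] t Ut.
    by exists i, U; split => // s; apply.
  have [i [U [OU Ux sU]]] := sub W tW x Wx.
  have [_ h] := proj1 (hVb i (p i x)).
  have [V hV VU] := h U (ex_intro _ U (And3 OU Ux (@subset_refl _ U))).
  exists (p i @^-1` V); first by exists i, V.
  by move=> t /VU /= Ut; apply/WN/sU.
split => //; exists [set W | exists i V, Vb i (p i x) V /\ W = p i @^-1` V]; split => //.
move=> W [i [V [hV ->]]]; apply: sub_gen_smallest; exists i, V; split => //.
exact: (proj2 (hVb i (p i x))).
Qed.

Theorem proposition3p1 (R : realType) :
  (* (a) inverse image under a linear map f1 : X -> X1, with I = {1} *)
  (forall (X X1 : lmodType R) (O1 G1 : set (set X1)) (f1 : {linear X -> X1})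
      (Vb : X1 -> set (set X1)),
    locally_measurable O1 G1 ->
    (forall x1, local_basis O1 x1 (Vb x1) /\ Vb x1 `<=` G1) ->
    let tau := @init_topology unit X (fun _ => X1) (fun _ => O1) (fun _ => (f1 : X -> X1)) in
    let F := @init_sigma unit X (fun _ => X1) (fun _ => G1) (fun _ => (f1 : X -> X1)) in
    forall x : X,
      local_basis tau x [set f1 @^-1` V | V in Vb (f1 x)] /\
      (exists B, local_basis tau x B /\ B `<=` F)) /\
  (* (b) projective limit of a projective system indexed by a directed
         preordered set (I, le) *)
  (forall (I : Type) (le : I -> I -> Prop) (X : I -> lmodType R)
      (O G : forall i, set (set (X i))) (f : forall i j, X j -> X i)
      (Vb : forall i, X i -> set (set (X i))),
    (forall i, le i i) ->
    (forall i j k, le i j -> le j k -> le i k) ->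
    inhabited I ->
    (forall i j, exists k, le i k /\ le j k) ->
    (forall i, locally_measurable (O i) (G i)) ->
    (forall i j, le i j ->
       [/\ linear (f i j), cont_wrt (O j) (O i) (f i j) &
           forall A, G i A -> G j (f i j @^-1` A)]) ->
    (forall i, f i i = id) ->
    (forall i j k, le i j -> le j k -> f i k = f i j \o f j k) ->
    (forall i xi, local_basis (O i) xi (Vb i xi) /\ Vb i xi `<=` G i) ->
    let tau := init_topology O (projlim_proj le f) in
    let F := init_sigma G (projlim_proj le f) in
    forall x : projlim le f,
      local_basis tau x
        [set W | exists i V, Vb i (projlim_proj le f i x) V /\ W = projlim_proj le f i @^-1` V] /\
      (exists B, local_basis tau x B /\ B `<=` F)).
Proof.
split.
  move=> X X1 O1 G1 f1 Vb [[topO1 _ _] _ _ _] hVb tau F x.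
  have := @gen_basis unit X (fun _ => X1) (fun _ => O1) (fun _ => G1)
     (fun _ => (f1 : X -> X1)) (fun _ => Vb) (inhabits tt) (fun _ => topO1) _
     (fun _ => hVb) x.
  have -> : [set f1 @^-1` V | V in Vb (f1 x)] =
     [set W | exists (i : unit) V, Vb (f1 x) V /\ W = f1 @^-1` V].
    apply/seteqP; split.
      by move=> W [V hV <-]; exists tt, V.
    by move=> W [_ [V [hV ->]]]; exists V.
  apply.
  move=> _ _ U1 U2 t OU1 OU2 U1t U2t; exists tt, (U1 `&` U2); split => //.
  by case: topO1 => _ h _; apply: h.
move=> I le X O G f Vb lerr letr [i0] dirI lmO hf fid fcomp hVb tau F x.
apply: gen_basis => //.
- by move=> i; case: (lmO i) => [[]].
- move=> i j U1 U2 t OU1 OU2 U1t U2t.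
  have [k [ik jk]] := dirI i j.
  have [_ ci _] := hf i k ik.
  have [_ cj _] := hf j k jk.
  case: (lmO k) => [[[_ hI _] _ _] _ _ _].
  exists k, (f i k @^-1` U1 `&` f j k @^-1` U2); split.
  + by apply: hI; [apply: ci | apply: cj].
  + rewrite /projlim_proj in U1t U2t *.
    by split => /=; [rewrite -(proj2_sig t i k ik) | rewrite -(proj2_sig t j k jk)].
  + move=> s [h1 h2]; rewrite /projlim_proj /= in h1 h2 *.
    by split => /=; [rewrite (proj2_sig s i k ik) | rewrite (proj2_sig s j k jk)].
Qed.
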